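(* Consider the fixed-design additive regression setting, the estimator $\hat g$ and tuning parameters described in the context, and assume the sub-Gaussian noise condition and the entropy condition hold. Let $\bar g=\sum_{j=1}^p\bar g_j\in\mathcal G$ be arbitrary. Then for any $A_0>1$, with probability at least $1-\epsilon$, $$\tfrac12\|\hat g-g^*\|_n^2+\tfrac12\|\hat g-\bar g\|_n^2+(A_0-1)R_n(\hat g-\bar g)\le \tfrac12\|\bar g-g^*\|_n^2+2A_0R_n(\bar g),$$ where $R_n(\hat g-\bar g)=\sum_j\{\rho_{nj}\|\hat g_j-\bar g_j\|_{F,j}+\lambda_{nj}\|\hat g_j-\bar g_j\|_n\}$.
   Context: Data: $(Y_i,X_i)$, $i=1,\dots,n$, with $Y_i\in\mathbb R$, $X_i\in\mathbb R^d$, $Y_i=g^*(X_i)+\varepsilon_i$, where $g^*$ is an arbitrary (not necessarily additive) function. Fixed design: $X_1,\dots,X_n$ are deterministic and probabilities refer to the noise. For $j=1,\dots,p$, $x^{(j)}$ is a fixed sub-vector of coordinates of $x$, $\mathcal G_j$ is a vector space of real functions of $x^{(j)}$ with a semi-norm $\|\cdot\|_{F,j}$, and $\mathcal G=\{g(x)=\sum_{j=1}^pg_j(x^{(j)}):g_j\in\mathcal G_j\}$; every $g\in\mathcal G$ comes with a decomposition $g=\sum_jg_j$ to which component-wise quantities refer. $\|f\|_n^2=n^{-1}\sum_if(X_i)^2$, $\|Y-g\|_n^2=n^{-1}\sum_i\{Y_i-g(X_i)\}^2$, $\langle\varepsilon,f\rangle_n=n^{-1}\sum_i\varepsilon_if(X_i)$.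 $H(u,\mathcal F,\|\cdot\|)$ is the log covering number at radius $u$. Sub-Gaussian noise condition: $\varepsilon_i$ independent, mean zero, $\max_iD_0E\exp(\varepsilon_i^2/D_0)\le D_1$. $C_1=C_1(D_0,D_1)>0$ is a constant depending only on $(D_0,D_1)$ such that for every $\delta>0$, every class $\mathcal F$ with $\sup_{\mathcal F}\|f\|_n\le\delta$ and every $\psi\ge\int_0^\delta H^{1/2}(u,\mathcal F,\|\cdot\|_n)du$, $P\{\sup_{\mathcal F}|\langle\varepsilon,f\rangle_n|/C_1>n^{-1/2}\psi+\delta\sqrt{t/n}\}\le e^{-t}$ for all $t>0$. Entropy condition: with $\mathcal G_j(\delta)=\{f\in\mathcal G_j:\|f\|_{F,j}+\|f\|_n/\delta\le1\}$, $\psi_{nj}(\delta)\ge\int_0^\delta H^{1/2}(u,\mathcal G_j(\delta),\|\cdot\|_n)du$ for $0<\delta\le1$. Tuning and estimator: $0<\epsilon<1$, $0<w_{nj}\le1$, $\gamma_{nj}=n^{-1/2}\psi_{nj}(w_{nj})/w_{nj}$, $\lambda_{nj}=C_1\{\gamma_{nj}+\sqrt{\log(p/\epsilon)/n}\}$, $\rho_{nj}=\lambda_{nj}w_{nj}$, $R_n(g)=\sum_j(\rho_{nj}\|g_j\|_{F,j}+\lambda_{nj}\|g_j\|_n)$; $\hat g=\sum_j\hat g_j$ minimizes $K_n(g)=\|Y-g\|_n^2/2+A_0R_n(g)$ over $g\in\mathcal G$ and decompositions. *)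

(* Defs.v *)
From HB Require Import structures.
From mathcomp Require Import all_boot all_order all_algebra.
From mathcomp Require Import all_classical all_reals all_analysis.
Set Implicit Arguments. Unset Strict Implicit. Unset Printing Implicit Defensive.
Import Order.TTheory GRing.Theory Num.Theory.
Local Open Scope classical_set_scope.
Local Open Scope ring_scope.

Section Defs.
Variable R : realType.

Definition empnorm {n : nat} {A : Type} (pts : 'I_n -> A) (f : A -> R) : R :=
  Num.sqrt (n%:R^-1 * \sum_(i < n) f (pts i) ^+ 2).

Definition empinner {n : nat} {A : Type} (pts : 'I_n -> A) (e : 'I_n -> R)
  (f : A -> R) : R := n%:R^-1 * \sum_(i < n) e i * f (pts i).

Definition has_cover {n : nat} {A : Type} (pts : 'I_n -> A) (F : set (A -> R))
  (u : R) (N : nat) : Prop :=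
  exists c : 'I_N -> (A -> R),
    forall f, F f -> exists k : 'I_N, empnorm pts (fun a => f a - c k a) <= u.

(* H^{1/2}(u, F, ||.||_n) = sqrt(log N(u, F, ||.||_n)), +oo if no finite cover *)
Definition sqrt_entropy {n : nat} {A : Type} (pts : 'I_n -> A)
  (F : set (A -> R)) (u : R) : \bar R :=
  ereal_inf [set (Num.sqrt (ln N%:R))%:E | N in has_cover pts F u].

Definition entropy_integral {n : nat} {A : Type} (pts : 'I_n -> A)
  (F : set (A -> R)) (delta : R) : \bar R :=
  (\int[lebesgue_measure]_(u in `[0%R, delta]%classic) sqrt_entropy pts F u)%E.

Definition fun_subspace {A : Type} (G : set (A -> R)) : Prop :=
  G (fun _ => 0) /\
  (forall f g, G f -> G g -> G (fun a => f a + g a)) /\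
  (forall (c : R) f, G f -> G (fun a => c * f a)).

Definition seminorm_on {A : Type} (G : set (A -> R)) (nF : (A -> R) -> R) : Prop :=
  (forall f, G f -> 0 <= nF f) /\
  (forall (c : R) f, G f -> nF (fun a => c * f a) = `|c| * nF f) /\
  (forall f g, G f -> G g -> nF (fun a => f a + g a) <= nF f + nF g).

Definition mutually_independent {d} {T : measurableType d} (P : probability T R)
  {n : nat} (X : 'I_n -> T -> R) : Prop :=
  forall B : 'I_n -> set R, (forall i, measurable (B i)) ->
    P [set w | forall i, B i (X i w)] = (\prod_(i < n) P (X i @^-1` B i))%E.

Definition subvec {d k : nat} (idx : 'I_k -> 'I_d) (x : 'rV[R]_d) : 'rV[R]_k :=
  \row_(l < k) x 0 (idx l).

End Defs.

(* Main.v *)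
Require Import Defs.
From HB Require Import structures.
From mathcomp Require Import all_boot all_order all_algebra.
From mathcomp Require Import all_classical all_reals all_analysis.
From mathcomp Require Import ring lra.
Set Implicit Arguments. Unset Strict Implicit.
Import Order.TTheory GRing.Theory Num.Theory.
Local Open Scope classical_set_scope.
Local Open Scope ring_scope.

Section Helpers.
Variable R : realType.

Lemma sum3 (I : finType) (F G H : I -> R) :
  \sum_i (F i + G i - 2 * H i) = \sum_i F i + \sum_i G i - 2 * \sum_i H i.
Proof. by rewrite sumrB big_split -mulr_sumr. Qed.

Lemma sum_prod (I : finType) (F G : I -> R) :
  \sum_i \sum_j F i * G j = (\sum_i F i) * (\sum_j G j).
Proof. by rewrite mulr_suml; apply: eq_bigr => i _; rewrite mulr_sumr. Qed.

Lemma cs_sum (I : finType) (a b : I -> R) :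
  (\sum_i a i * b i) ^+ 2 <= (\sum_i a i ^+ 2) * (\sum_i b i ^+ 2).
Proof.
have H : 0 <= \sum_i \sum_j (a i * b j - a j * b i) ^+ 2.
  by apply: sumr_ge0 => i _; apply: sumr_ge0 => j _; exact: sqr_ge0.
have E : \sum_i \sum_j (a i * b j - a j * b i) ^+ 2 =
  2 * ((\sum_i a i ^+ 2) * (\sum_i b i ^+ 2)) - 2 * (\sum_i a i * b i) ^+ 2.
  have E1 : forall i j, (a i * b j - a j * b i) ^+ 2 =
     a i ^+ 2 * b j ^+ 2 + b i ^+ 2 * a j ^+ 2 - 2 * ((a i * b i) * (a j * b j)).
    by move=> i j; ring.
  under eq_bigr do under eq_bigr do rewrite E1.
  under eq_bigr do rewrite sum3.
  rewrite sum3 !sum_prod; ring.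
move: H; rewrite E subr_ge0 => H.
by rewrite -(@ler_pM2l _ 2).
Qed.


Lemma sumsq_ge0 (I : finType) (a : I -> R) : 0 <= \sum_i a i ^+ 2.
Proof. by apply: sumr_ge0 => i _; exact: sqr_ge0. Qed.

Lemma sum_tri (I : finType) (a b : I -> R) :
  Num.sqrt (\sum_i (a i + b i) ^+ 2) <=
  Num.sqrt (\sum_i a i ^+ 2) + Num.sqrt (\sum_i b i ^+ 2).
Proof.
set A := Num.sqrt (\sum_i a i ^+ 2); set B := Num.sqrt (\sum_i b i ^+ 2).
have A0 : 0 <= A by exact: sqrtr_ge0.
have B0 : 0 <= B by exact: sqrtr_ge0.
rewrite -(@ler_pXn2r _ 2) // ?nnegrE ?sqrtr_ge0 ?addr_ge0 //.
rewrite sqr_sqrtr ?sumsq_ge0 //.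
have E : \sum_i (a i + b i) ^+ 2 =
  \sum_i a i ^+ 2 + \sum_i b i ^+ 2 + 2 * \sum_i a i * b i.
  rewrite -big_split /= mulr_sumr -big_split /=; apply: eq_bigr => i _; ring.
have HA : A ^+ 2 = \sum_i a i ^+ 2 by rewrite sqr_sqrtr ?sumsq_ge0.
have HB : B ^+ 2 = \sum_i b i ^+ 2 by rewrite sqr_sqrtr ?sumsq_ge0.
have CS : \sum_i a i * b i <= A * B.
  apply: le_trans (ler_norm _) _.
  rewrite -(@ler_pXn2r _ 2) ?nnegrE ?normr_ge0 ?mulr_ge0 //.
  by rewrite -normrX ger0_norm ?sqr_ge0 // exprMn HA HB cs_sum.
rewrite E -HA -HB; nra.
Qed.

Variables (n : nat) (Aty : Type) (pts : 'I_n -> Aty).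

Lemma empnorm_ge0 (f : Aty -> R) : 0 <= empnorm pts f.
Proof. exact: sqrtr_ge0. Qed.

Lemma empnorm_arg_ge0 (f : Aty -> R) : 0 <= n%:R^-1 * \sum_(i < n) f (pts i) ^+ 2.
Proof. by rewrite mulr_ge0 ?invr_ge0 ?ler0n ?sumsq_ge0. Qed.

Lemma empnorm_sq (f : Aty -> R) : empnorm pts f ^+ 2 = n%:R^-1 * \sum_(i < n) f (pts i) ^+ 2.
Proof. by rewrite /empnorm sqr_sqrtr // empnorm_arg_ge0. Qed.

Lemma empnorm_ext (f g : Aty -> R) : (forall i, f (pts i) = g (pts i)) -> empnorm pts f = empnorm pts g.
Proof. by move=> H; rewrite /empnorm; congr (Num.sqrt (_ * _)); apply: eq_bigr => i _; rewrite H. Qed.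

Lemma empnormZ (c : R) (f : Aty -> R) : empnorm pts (fun a => c * f a) = `|c| * empnorm pts f.
Proof.
rewrite /empnorm.
rewrite (eq_bigr (fun i => c ^+ 2 * f (pts i) ^+ 2)); last by move=> i _; rewrite exprMn.
by rewrite -mulr_sumr mulrCA sqrtrM ?sqr_ge0 // sqrtr_sqr.
Qed.

Lemma empnormD (f g : Aty -> R) : empnorm pts (fun a => f a + g a) <= empnorm pts f + empnorm pts g.
Proof.
rewrite /empnorm !sqrtrM ?invr_ge0 ?ler0n ?sumsq_ge0 // -mulrDr.
by rewrite ler_wpM2l ?sqrtr_ge0 // sum_tri.
Qed.

Lemma empnorm_eq0 (f : Aty -> R) : (0 < n)%N -> empnorm pts f = 0 -> forall i, f (pts i) = 0.
Proof.
move=> n0 H i.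
have : n%:R^-1 * \sum_(i < n) f (pts i) ^+ 2 = 0.
  by rewrite -empnorm_sq H expr0n.
move/eqP; rewrite mulf_eq0 invr_eq0 pnatr_eq0 (negbTE (lt0n_neq0 n0)) /= psumr_eq0; last first.
  by move=> j _; exact: sqr_ge0.
by move/allP => /(_ i (mem_index_enum _)); rewrite /= sqrf_eq0 => /eqP.
Qed.


Lemma lin4 (I : finType) (c1 c2 c3 c4 : R) (F1 F2 F3 F4 : I -> R) :
  \sum_i (c1 * F1 i + c2 * F2 i + c3 * F3 i + c4 * F4 i) =
  c1 * \sum_i F1 i + c2 * \sum_i F2 i + c3 * \sum_i F3 i + c4 * \sum_i F4 i.
Proof. by rewrite !big_split /= !mulr_sumr. Qed.

Lemma small_t (a0 b0 : R) : 0 <= b0 ->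
  (forall t, 0 < t <= 1 -> 0 <= a0 + t * b0) -> 0 <= a0.
Proof.
move=> b00 H; rewrite leNgt; apply/negP => a0n.
set D := b0 - a0.
have D0 : 0 < D by rewrite /D; lra.
set t := - a0 / D.
have tD : t * D = - a0 by rewrite /t mulrVK ?unitfE ?gt_eqF.
have t0 : 0 < t by rewrite /t divr_gt0 // oppr_gt0.
have t1 : t <= 1.
  have : t * D <= 1 * D by rewrite tD mul1r /D; lra.
  by rewrite ler_pM2r.
have := H t (andb_true_intro (conj t0 t1)).
move=> Ht.
have : 0 <= (a0 + t * b0) * D by rewrite mulr_ge0 // ltW.
have -> : (a0 + t * b0) * D = a0 * D + (t * D) * b0 by ring.
rewrite tD /D; nra.
Qed.

Lemma basic_ineq (N : nat) (a b g e : 'I_N -> R) (Ra Rb A0 : R) :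
  0 < A0 ->
  (forall t, 0 < t <= 1 -> exists Rt, Rt <= (1 - t) * Ra + t * Rb /\
     (N%:R^-1 * \sum_i (g i + e i - a i) ^+ 2) / 2 + A0 * Ra <=
     (N%:R^-1 * \sum_i (g i + e i - ((1 - t) * a i + t * b i)) ^+ 2) / 2 + A0 * Rt) ->
  (N%:R^-1 * \sum_i (a i - g i) ^+ 2) / 2 + (N%:R^-1 * \sum_i (a i - b i) ^+ 2) / 2
  <= (N%:R^-1 * \sum_i (b i - g i) ^+ 2) / 2 + N%:R^-1 * \sum_i e i * (a i - b i)
     + A0 * (Rb - Ra).
Proof.
move=> A00 H.
set m := N%:R^-1.
have m0 : 0 <= m by rewrite /m invr_ge0 ler0n.
set S0 := \sum_i (g i + e i - a i) ^+ 2.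
set S1 := \sum_i (g i + e i - a i) * (b i - a i).
set S2 := \sum_i (b i - a i) ^+ 2.
have S20 : 0 <= S2 by apply: sumsq_ge0.
have key : 0 <= - m * S1 + A0 * (Rb - Ra).
  apply: (@small_t _ (m * S2 / 2)); first by rewrite divr_ge0 ?mulr_ge0.
  move=> t /andP [t0 t1].
  have [Rt [HRt Ht]] := H t (andb_true_intro (conj t0 t1)).
  have E : \sum_i (g i + e i - ((1 - t) * a i + t * b i)) ^+ 2 =
     1 * S0 + (- 2 * t) * S1 + t ^+ 2 * S2 + 0 * S2.
    by rewrite /S0 /S1 /S2 -lin4; apply: eq_bigr => i _; ring.
  move: Ht; rewrite -/m -/S0 E => Ht.
  have HA : A0 * Rt <= A0 * ((1 - t) * Ra + t * Rb) by rewrite ler_pM2l.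
  have : 0 <= t * (- m * S1 + A0 * (Rb - Ra) + t * (m * S2 / 2)).
    have -> : t * (- m * S1 + A0 * (Rb - Ra) + t * (m * S2 / 2)) =
      (m * (1 * S0 + (- 2 * t) * S1 + t ^+ 2 * S2 + 0 * S2) / 2
        + A0 * ((1 - t) * Ra + t * Rb)) - (m * S0 / 2 + A0 * Ra) by field.
    lra.
  by rewrite pmulr_rge0.
have E2 : \sum_i (b i - g i) ^+ 2 + 2 * \sum_i e i * (a i - b i) =
   1 * \sum_i (a i - g i) ^+ 2 + 1 * \sum_i (a i - b i) ^+ 2 + (-2) * S1 + 0 * S1.
  rewrite /S1 -lin4 mulr_sumr -big_split; apply: eq_bigr => i _ /=; ring.
have : m * (\sum_i (b i - g i) ^+ 2 + 2 * \sum_i e i * (a i - b i)) =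
   m * (1 * \sum_i (a i - g i) ^+ 2 + 1 * \sum_i (a i - b i) ^+ 2 + (-2) * S1 + 0 * S1).
  by rewrite E2.
move: key; nra.
Qed.


Lemma semi_convex (A : Type) (Gs : set (A -> R)) (nFs : (A -> R) -> R) (f g : A -> R) (t : R) :
  fun_subspace Gs -> seminorm_on Gs nFs -> Gs f -> Gs g -> 0 <= t <= 1 ->
  Gs (fun a => (1 - t) * f a + t * g a) /\
  nFs (fun a => (1 - t) * f a + t * g a) <= (1 - t) * nFs f + t * nFs g.
Proof.
move=> [G0 [GD GZ]] [n0 [nZ nD]] Gf Gg /andP [t0 t1].
have G1 := GZ (1 - t) f Gf; have G2 := GZ t g Gg.
split; first exact: GD.
apply: le_trans (nD _ _ G1 G2) _.
rewrite nZ // nZ // !ger0_norm //; lra.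
Qed.

Lemma semi_sub (A : Type) (Gs : set (A -> R)) (nFs : (A -> R) -> R) (f g : A -> R) :
  fun_subspace Gs -> seminorm_on Gs nFs -> Gs f -> Gs g ->
  Gs (fun a => f a - g a) /\ nFs (fun a => f a - g a) <= nFs f + nFs g.
Proof.
move=> [G0 [GD GZ]] [n0 [nZ nD]] Gf Gg.
have G2 := GZ (-1) g Gg.
have -> : (fun a => f a - g a) = (fun a => f a + (-1) * g a).
  by apply: funext => a; rewrite mulN1r.
split; first exact: GD.
apply: le_trans (nD _ _ Gf G2) _.
by rewrite nZ // normrN normr1 mul1r.
Qed.

Lemma scale_bound (A : Type) (Gs : set (A -> R)) (nFs : (A -> R) -> R)
  (nrm : (A -> R) -> R) (L : (A -> R) -> R) (wj rhoj lamj : R) :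
  fun_subspace Gs -> seminorm_on Gs nFs ->
  (forall c f, nrm (fun a => c * f a) = `|c| * nrm f) ->
  (forall f, 0 <= nrm f) ->
  (forall c f, L (fun a => c * f a) = c * L f) ->
  (forall f, nrm f = 0 -> L f = 0) ->
  0 < wj -> rhoj = lamj * wj ->
  (forall f, Gs f -> nFs f + nrm f / wj <= 1 -> `|L f| <= rhoj) ->
  forall f, Gs f -> `|L f| <= rhoj * nFs f + lamj * nrm f.
Proof.
move=> [G0 [GD GZ]] [n0 [nZ nD]] nrmZ nrm0 LZ L0 w0 rhoE H f Gf.
have nF0 := n0 f Gf; have nr0 := nrm0 f.
set r := nFs f + nrm f / wj.
have r0 : 0 <= r by rewrite /r addr_ge0 // divr_ge0 // ltW.
have [r00|rpos] := eqVneq r 0.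
  have nf0 : nFs f = 0.
    apply/eqP; rewrite eq_le nF0 andbT.
    have : nrm f / wj >= 0 by rewrite divr_ge0 // ltW.
    move: r00; rewrite /r; lra.
  have nr00 : nrm f = 0.
    move: r00; rewrite /r nf0 add0r => /eqP; rewrite mulf_eq0 invr_eq0 (gt_eqF w0) orbF.
    by move/eqP.
  by rewrite L0 // normr0 nf0 nr00 !mulr0 addr0.
have rp : 0 < r by rewrite lt_neqAle eq_sym rpos r0.
have Hg := H _ (GZ r^-1 f Gf).
rewrite nZ // nrmZ LZ ger0_norm ?invr_ge0 // in Hg.
have : r^-1 * nFs f + r^-1 * nrm f / wj <= 1.
  by rewrite -mulrA -mulrDr mulVf // gt_eqF.
move/Hg; rewrite normrM ger0_norm ?invr_ge0 // => Hb.
have : `|L f| <= r * rhoj.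
  by rewrite -(@ler_pM2l _ r^-1) ?invr_gt0 // mulrA mulVf ?gt_eqF // mul1r.
move=> Hc; apply: le_trans Hc _.
rewrite /r rhoE.
rewrite le_eqVlt; apply/orP; left; apply/eqP; have wn : wj != 0 by rewrite gt_eqF.
by field.
Qed.


Lemma sqrt_entropy_ge0 (N : nat) (A : Type) (pt : 'I_N -> A) (F : set (A -> R)) u :
  (0 <= sqrt_entropy pt F u)%E.
Proof. by apply/ereal_infP => y [M _ <-]; rewrite lee_fin sqrtr_ge0. Qed.

Lemma entropy_integral_ge0 (N : nat) (A : Type) (pt : 'I_N -> A) (F : set (A -> R)) delta :
  (0 <= entropy_integral pt F delta)%E.
Proof. by apply: integral_ge0 => x _; exact: sqrt_entropy_ge0. Qed.

Lemma entropy_mono (N : nat) (A B : Type) (ptsA : 'I_N -> A) (ptsB : 'I_N -> B)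
  (FA : set (A -> R)) (FB : set (B -> R)) delta :
  (forall u M, has_cover ptsB FB u M -> has_cover ptsA FA u M) ->
  (entropy_integral ptsA FA delta <= entropy_integral ptsB FB delta)%E.
Proof.
move=> HC.
have Hle : forall u, (sqrt_entropy ptsA FA u <= sqrt_entropy ptsB FB u)%E.
  move=> u; apply: ereal_inf_le_tmp => _ [M HM <-].
  by exists M => //; apply: HC.
rewrite /entropy_integral !ge0_integralE //=; last 2 first.
- by move=> x _; exact: sqrt_entropy_ge0.
- by move=> x _; exact: sqrt_entropy_ge0.
apply: ereal_sup_le => _ [h Hh <-]; exists h => //= x.
apply: le_trans (Hh x) _.
rewrite /patch; case: ifP => // _; exact: Hle.
Qed.

Lemma union_bound (dd : measure_display) (T : measurableType dd) (P : probability T R)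
  (Ef : nat -> set T) (p : nat) (del : R) :
  (forall k, measurable (Ef k)) ->
  (forall k, (k < p)%N -> ((1 - del)%:E <= P (Ef k))%E) ->
  measurable (~` \big[setU/set0]_(k < p) ~` Ef k) /\
  ((1 - p%:R * del)%:E <= P (~` \big[setU/set0]_(k < p) ~` Ef k))%E /\
  forall om k, (~` \big[setU/set0]_(k < p) ~` Ef k) om -> (k < p)%N -> Ef k om.
Proof.
move=> mE HE.
have mU : measurable (\big[setU/set0]_(k < p) ~` Ef k).
  by apply: bigsetU_measurable => k _; apply: measurableC.
have fin : forall U, measurable U -> P U = (fine (P U))%:E.
  by move=> U mU'; rewrite fineK // fin_num_measure.
split; first exact: measurableC.
split.
  rewrite probability_setC // (fin _ mU) lee_fin.
  have B := Boole_inequality P (A := fun k => ~` Ef k) (n := p) (fun k _ => measurableC (mE k)).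
  have B2 : (\sum_(k < p) P (~` Ef k) <= \sum_(k < p) del%:E)%E.
    apply: lee_sum => k _.
    rewrite probability_setC // (fin _ (mE k)).
    have := HE k (ltn_ord k); rewrite (fin _ (mE k)) lee_fin => H.
    rewrite -EFinB lee_fin; lra.
  have := le_trans B B2; rewrite /= sumEFin (fin _ mU) lee_fin sumr_const card_ord => H.
  rewrite -mulr_natl in H; lra.
move=> om k Hom kp; apply: contrapT => nE; apply: Hom.
rewrite -(bigcup_mkord p (fun k => ~` Ef k)); exists k => //.
Qed.


End Helpers.

Lemma empnormB (R : realType) (N : nat) (B : Type) (pt : 'I_N -> B) (f g : B -> R) :
  empnorm pt (fun a => f a - g a) <= empnorm pt f + empnorm pt g.
Proof.
have -> : (fun a => f a - g a) = (fun a => f a + (-1) * g a).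
  by apply: funext => a; rewrite mulN1r.
apply: le_trans (@empnormD R N B pt f (fun a => (-1) * g a)) _.
by rewrite empnormZ normrN normr1 mul1r.
Qed.

Lemma empnorm_convex (R : realType) (N : nat) (B : Type) (pt : 'I_N -> B) (f g : B -> R) (t : R) :
  0 <= t <= 1 ->
  empnorm pt (fun a => (1 - t) * f a + t * g a) <= (1 - t) * empnorm pt f + t * empnorm pt g.
Proof.
move=> /andP [t0 t1].
apply: le_trans (@empnormD R N B pt (fun a => (1 - t) * f a) (fun a => t * g a)) _.
by rewrite !empnormZ !ger0_norm // subr_ge0.
Qed.


Theorem corollary1
  (R : realType) (dT : measure_display) (T : measurableType dT)
  (P : probability T R)
  (n d p : nat) (n_gt0 : (0 < n)%N) (p_gt0 : (0 < p)%N)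
  (* fixed design and regression function *)
  (X : 'I_n -> 'rV[R]_d) (gstar : 'rV[R]_d -> R)
  (* noise and responses Y_i = g*(X_i) + eps_i *)
  (eps : 'I_n -> T -> R) (Y : 'I_n -> T -> R)
  (eps_meas : forall i, measurable_fun setT (eps i))
  (Y_def : forall i w, Y i w = gstar (X i) + eps i w)
  (* additive structure: x^(j) = sub-vector of coordinates idx j *)
  (dj : 'I_p -> nat) (idx : forall j : 'I_p, 'I_(dj j) -> 'I_d)
  (idx_inj : forall j, injective (idx j))
  (G : forall j : 'I_p, set ('rV[R]_(dj j) -> R))
  (nF : forall j : 'I_p, ('rV[R]_(dj j) -> R) -> R)
  (G_sub : forall j, fun_subspace (G j))
  (nF_semi : forall j, seminorm_on (G j) (nF j))
  (* sub-Gaussian noise condition *)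
  (D0 D1 : R) (D0_gt0 : 0 < D0) (D1_gt0 : 0 < D1)
  (eps_indep : mutually_independent P eps)
  (eps_mean0 : forall i, 'E_P[eps i]%E = 0%E)
  (eps_subG : forall i,
     (D0%:E * 'E_P[fun w => expR (eps i w ^+ 2 / D0)] <= D1%:E)%E)
  (* the constant C1 of the concentration inequality *)
  (C1 : R) (C1_gt0 : 0 < C1)
  (C1_prop : forall (delta : R), 0 < delta ->
     forall F : set ('rV[R]_d -> R),
     (forall f, F f -> empnorm X f <= delta) ->
     forall psi : R, (entropy_integral X F delta <= psi%:E)%E ->
     forall t : R, 0 < t ->
     exists E : set T, measurable E /\
       ((1 - expR (- t))%:E <= P E)%E /\
       forall w, E w -> forall f, F f ->
         `|empinner X (fun i => eps i w) f| / C1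
           <= (Num.sqrt n%:R)^-1 * psi + delta * Num.sqrt (t / n%:R))
  (* entropy condition *)
  (psi : 'I_p -> R -> R)
  (entropy_cond : forall j (delta : R), 0 < delta <= 1 ->
     (entropy_integral (fun i => subvec (idx j) (X i))
        [set f | G j f /\ (nF j f + empnorm (fun i => subvec (idx j) (X i)) f / delta <= 1)%R]
        delta <= (psi j delta)%:E)%E)
  (* tuning parameters *)
  (epsilon : R) (eps_pos : 0 < epsilon < 1)
  (w : 'I_p -> R) (w_pos : forall j, 0 < w j <= 1) :
  let normj (j : 'I_p) (f : 'rV[R]_(dj j) -> R) :=
    empnorm (fun i => subvec (idx j) (X i)) f in
  let gamma (j : 'I_p) := (Num.sqrt n%:R)^-1 * psi j (w j) / w j in
  let lambda (j : 'I_p) :=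
    C1 * (gamma j + Num.sqrt (ln (p%:R / epsilon) / n%:R)) in
  let rho (j : 'I_p) := lambda j * w j in
  (* decompositions g = sum_j g_j with g_j in G_j *)
  let decomp := fun gc : (forall j : 'I_p, 'rV[R]_(dj j) -> R) =>
    forall j, G j (gc j) in
  let eval := fun (gc : forall j : 'I_p, 'rV[R]_(dj j) -> R) (x : 'rV[R]_d) =>
    \sum_(j < p) gc j (subvec (idx j) x) in
  let Rn := fun gc : (forall j : 'I_p, 'rV[R]_(dj j) -> R) =>
    \sum_(j < p) (rho j * nF j (gc j) + lambda j * normj j (gc j)) in
  let Kn := fun (A0 : R) (om : T) (gc : forall j : 'I_p, 'rV[R]_(dj j) -> R) =>
    (n%:R^-1 * \sum_(i < n) (Y i om - eval gc (X i)) ^+ 2) / 2 + A0 * Rn gc in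
  forall gbar : (forall j : 'I_p, 'rV[R]_(dj j) -> R), decomp gbar ->
  forall A0 : R, 1 < A0 ->
  exists E : set T, measurable E /\ ((1 - epsilon)%:E <= P E)%E /\
    forall om, E om ->
    forall ghat : (forall j : 'I_p, 'rV[R]_(dj j) -> R),
      decomp ghat ->
      (forall gc, decomp gc -> Kn A0 om ghat <= Kn A0 om gc) ->
      (empnorm X (fun x => eval ghat x - gstar x)) ^+ 2 / 2
      + (empnorm X (fun x => eval ghat x - eval gbar x)) ^+ 2 / 2
      + (A0 - 1) * Rn (fun j z => ghat j z - gbar j z)
      <= (empnorm X (fun x => eval gbar x - gstar x)) ^+ 2 / 2
         + 2 * A0 * Rn gbar.
Proof.
move=> normj gamma lambda rho decomp eval Rn Kn gbar dbar A0 A01.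
have n0 : 0 < n%:R :> R by rewrite ltr0n.
have p0 : 0 < p%:R :> R by rewrite ltr0n.
have /andP [e0 e1] := eps_pos.
set t := ln (p%:R / epsilon).
have pe1 : 1 < p%:R / epsilon.
  rewrite ltr_pdivlMr // mul1r; apply: lt_le_trans e1 _.
  by rewrite ler1n.
have t0 : 0 < t by rewrite /t ln_gt0.
have et : expR (- t) = epsilon / p%:R.
  by rewrite /t expRN lnK ?posrE ?divr_gt0 // invf_div.
have psi0 : forall j, 0 <= psi j (w j).
  move=> j; have := entropy_cond j (w j) (w_pos j).
  have := @entropy_integral_ge0 R n _ (fun i => subvec (idx j) (X i))
     [set f | G j f /\ (nF j f + empnorm (fun i => subvec (idx j) (X i)) f / w j <= 1)%R] (w j).
  move=> H1 H2; have := le_trans H1 H2; by rewrite lee_fin.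
have lam0 : forall j, 0 <= lambda j.
  move=> j; have /andP [w0 _] := w_pos j.
  rewrite /lambda /gamma; apply: mulr_ge0; first exact: ltW.
  apply: addr_ge0; last exact: sqrtr_ge0.
  apply: divr_ge0; last exact: ltW.
  by apply: mulr_ge0 => //; rewrite invr_ge0 sqrtr_ge0.
have rho0 : forall j, 0 <= rho j.
  move=> j; have /andP [w0 _] := w_pos j; rewrite /rho; apply: mulr_ge0 => //; exact: ltW.
have HE : forall k : nat, exists Ek : set T, measurable Ek /\
    ((k < p)%N -> ((1 - epsilon / p%:R)%:E <= P Ek)%E) /\
    forall j : 'I_p, nat_of_ord j = k -> forall om, Ek om -> forall f, G j f ->
      `|empinner X (fun i => eps i om) (fun x => f (subvec (idx j) x))|
        <= rho j * nF j f + lambda j * normj j f.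
  move=> k; case: (ltnP k p) => kp; last first.
    exists setT; split => //; split.
      by [] || by move=> H; have := leq_trans H kp; rewrite ltnn.
    move=> j jk; exfalso; have := leq_trans (ltn_ord j) kp.
    by rewrite jk ltnn.
  pose j0 := Ordinal kp.
  have /andP [w0 w1] := w_pos j0.
  pose FB := [set f | G j0 f /\ (nF j0 f + empnorm (fun i => subvec (idx j0) (X i)) f / w j0 <= 1)%R].
  pose FA := [set h : 'rV[R]_d -> R | exists f, FB f /\ h = (fun x => f (subvec (idx j0) x))].
  have Fle : forall h, FA h -> empnorm X h <= w j0.
    move=> _ [f [[Gf Hf] ->]].
    have nF0 := (nF_semi j0).1 f Gf.
    have : empnorm (fun i => subvec (idx j0) (X i)) f / w j0 <= 1 by lra.
    by rewrite ler_pdivrMr // mul1r.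
  have Hent : (entropy_integral X FA (w j0) <= (psi j0 (w j0))%:E)%E.
    apply: le_trans (entropy_cond j0 (w j0) (w_pos j0)).
    apply: entropy_mono => u M [c Hc].
    exists (fun m x => c m (subvec (idx j0) x)) => _ [f [Ff ->]].
    exact: Hc.
  have [E [mE [PE HEw]]] := C1_prop (w j0) w0 FA Fle _ Hent t t0.
  exists E; split => //; split.
    by move=> _; rewrite -et.
  move=> j jk; have -> : j = j0 by apply: val_inj.
  move=> om Eom.
  apply: (@scale_bound R _ (G j0) (nF j0) (normj j0)
    (fun f => empinner X (fun i => eps i om) (fun x => f (subvec (idx j0) x)))
    (w j0) (rho j0) (lambda j0) (G_sub j0) (nF_semi j0)).
  - by move=> c f; exact: empnormZ.
  - by move=> f; exact: empnorm_ge0.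
  - move=> c f /=; rewrite /empinner mulrCA; congr (_ * _); rewrite mulr_sumr.
    by apply: eq_bigr => i _; ring.
  - move=> f nf0; rewrite /empinner big1 ?mulr0 // => i _.
    by have := @empnorm_eq0 R n _ _ f n_gt0 nf0 i => /= ->; rewrite mulr0.
  - exact: w0.
  - by [].
  - move=> f Gf Hf.
    have := HEw om Eom (fun x => f (subvec (idx j0) x)) (ex_intro _ f (conj (conj Gf Hf) erefl)).
    rewrite ler_pdivrMr // => H; apply: le_trans H _.
    rewrite le_eqVlt; apply/orP; left; apply/eqP.
    have wn : w j0 != 0 by rewrite gt_eqF.
    have sn : Num.sqrt (n%:R : R) != 0 by rewrite gt_eqF // sqrtr_gt0.
    rewrite /rho /lambda /gamma /t.
    set s1 := Num.sqrt (ln _ / _); set q := _ * psi j0 (w j0).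
    by field.
have [Ef HEf] := choice HE.
have [mE [PE Eall]] := @union_bound R dT T P Ef p (epsilon / p%:R)
   (fun k => (HEf k).1) (fun k kp => (HEf k).2.1 kp).
exists (~` \big[setU/set0]_(k < p) ~` Ef k); split => //; split.
  have -> : (1 - epsilon) = 1 - p%:R * (epsilon / p%:R).
    have pn : p%:R != 0 :> R by rewrite gt_eqF.
    by field.
  exact: PE.
move=> om Eom ghat dhat opt.
have Hbd : forall j f, G j f ->
      `|empinner X (fun i => eps i om) (fun x => f (subvec (idx j) x))|
        <= rho j * nF j f + lambda j * normj j f.
  by move=> j; apply: (HEf j).2.2 j erefl om (Eall om j Eom (ltn_ord j)).
have RnD : Rn (fun j z => ghat j z - gbar j z) <= Rn ghat + Rn gbar.
  rewrite /Rn -big_split /=; apply: ler_sum => j _.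
  have [_ h1] := semi_sub (G_sub j) (nF_semi j) (dhat j) (dbar j).
  have h2 := empnormB (fun i => subvec (idx j) (X i)) (ghat j) (gbar j).
  have h3 := ler_wpM2l (rho0 j) h1.
  have h4 := ler_wpM2l (lam0 j) h2.
  rewrite /normj; lra.
have Inner : n%:R^-1 * \sum_i eps i om * (eval ghat (X i) - eval gbar (X i))
    <= Rn (fun j z => ghat j z - gbar j z).
  have -> : n%:R^-1 * \sum_i eps i om * (eval ghat (X i) - eval gbar (X i)) =
     \sum_j empinner X (fun i => eps i om) (fun x => ghat j (subvec (idx j) x) - gbar j (subvec (idx j) x)).
    rewrite /empinner -mulr_sumr; congr (_ * _).
    rewrite exchange_big /=; apply: eq_bigr => i _.
    by rewrite /eval -sumrB mulr_sumr.
  rewrite /Rn; apply: ler_sum => j _.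
  apply: le_trans (ler_norm _) _.
  exact: (Hbd j _ (semi_sub (G_sub j) (nF_semi j) (dhat j) (dbar j)).1).
have Hopt : forall t', 0 < t' <= 1 -> exists Rt, Rt <= (1 - t') * Rn ghat + t' * Rn gbar /\
   (n%:R^-1 * \sum_i (gstar (X i) + eps i om - eval ghat (X i)) ^+ 2) / 2 + A0 * Rn ghat <=
   (n%:R^-1 * \sum_i (gstar (X i) + eps i om - ((1 - t') * eval ghat (X i) + t' * eval gbar (X i))) ^+ 2) / 2 + A0 * Rt.
  move=> t' /andP [t'0 t'1].
  have t'01 : 0 <= t' <= 1 by rewrite ltW.
  pose gc := fun j z => (1 - t') * ghat j z + t' * gbar j z.
  exists (Rn gc); split.
    rewrite /Rn !mulr_sumr -big_split /=; apply: ler_sum => j _.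
    have [_ h1] := semi_convex (G_sub j) (nF_semi j) (dhat j) (dbar j) t'01.
    have h2 := empnorm_convex (fun i => subvec (idx j) (X i)) (ghat j) (gbar j) t'01.
    have h3 := ler_wpM2l (rho0 j) h1.
    have h4 := ler_wpM2l (lam0 j) h2.
    rewrite /normj /gc; lra.
  have dgc : decomp gc.
    by move=> j; exact: (semi_convex (G_sub j) (nF_semi j) (dhat j) (dbar j) t'01).1.
  have := opt gc dgc; rewrite /Kn.
  have EK : forall gc', \sum_i (Y i om - eval gc' (X i)) ^+ 2 =
      \sum_i (gstar (X i) + eps i om - eval gc' (X i)) ^+ 2.
    by move=> gc'; apply: eq_bigr => i _; rewrite Y_def.
  rewrite !EK.
  have -> : \sum_i (gstar (X i) + eps i om - eval gc (X i)) ^+ 2 =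
     \sum_i (gstar (X i) + eps i om - ((1 - t') * eval ghat (X i) + t' * eval gbar (X i))) ^+ 2.
    apply: eq_bigr => i _.
    by rewrite /eval /gc big_split /= -!mulr_sumr.
  done.
have B : (n%:R^-1 * \sum_i (eval ghat (X i) - gstar (X i)) ^+ 2) / 2
      + (n%:R^-1 * \sum_i (eval ghat (X i) - eval gbar (X i)) ^+ 2) / 2
  <= (n%:R^-1 * \sum_i (eval gbar (X i) - gstar (X i)) ^+ 2) / 2
     + n%:R^-1 * \sum_i eps i om * (eval ghat (X i) - eval gbar (X i))
     + A0 * (Rn gbar - Rn ghat).
  exact: (basic_ineq (a := fun i => eval ghat (X i)) (b := fun i => eval gbar (X i))
     (g := fun i => gstar (X i)) (e := fun i => eps i om) (Ra := Rn ghat) (Rb := Rn gbar)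
     (A0 := A0) (lt_trans ltr01 A01) Hopt).
have E1 : empnorm X (fun x => eval ghat x - gstar x) ^+ 2 =
   n%:R^-1 * \sum_i (eval ghat (X i) - gstar (X i)) ^+ 2 := empnorm_sq _ _.
have E2 : empnorm X (fun x => eval ghat x - eval gbar x) ^+ 2 =
   n%:R^-1 * \sum_i (eval ghat (X i) - eval gbar (X i)) ^+ 2 := empnorm_sq _ _.
have E3 : empnorm X (fun x => eval gbar x - gstar x) ^+ 2 =
   n%:R^-1 * \sum_i (eval gbar (X i) - gstar (X i)) ^+ 2 := empnorm_sq _ _.
rewrite E1 E2 E3.
have HA : A0 * Rn (fun j z => ghat j z - gbar j z) <= A0 * (Rn ghat + Rn gbar).
  by rewrite ler_pM2l // (lt_trans ltr01 A01).
lra.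
Qed.
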